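(* Let $\mathcal X$ and $\mathcal Y$ be Banach spaces, let $A$ be a closed, densely defined linear operator from $\operatorname{dom}A\subset\mathcal X$ to $\mathcal Y$, and let $B$ be a closed, densely defined linear operator from $\operatorname{dom}B\subset\mathcal Y$ to $\mathcal X$. Assume $\rho(AB)\neq\emptyset$ and $\rho(BA)\neq\emptyset$. Then for every $\lambda\in\mathbb C\setminus\{0\}$: (i) $\operatorname{ran}(AB-\lambda)$ is closed if and only if $\operatorname{ran}(BA-\lambda)$ is closed; (ii) $\operatorname{ran}(AB-\lambda)$ is dense in $\mathcal Y$ if and only if $\operatorname{ran}(BA-\lambda)$ is dense in $\mathcal X$; (iii) $AB-\lambda$ is upper semi-Fredholm if and only if $BA-\lambda$ is upper semi-Fredholm; (iv) $AB-\lambda$ is lower semi-Fredholm if and only if $BA-\lambda$ is lower semi-Fredholm. Consequently, $\sigma_{ap}(AB)\setminus\{0\}=\sigma_{ap}(BA)\setminus\{0\}$, $\sigma_c(AB)\setminus\{0\}=\sigma_c(BA)\setminus\{0\}$, $\sigma_r(AB)\setminus\{0\}=\sigma_r(BA)\setminus\{0\}$, and $\sigma_{ess}(AB)\setminus\{0\}=\sigma_{ess}(BA)\setminus\{0\}$.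
   Context: Products have natural domains: $\operatorname{dom}(AB)=\{y\in\operatorname{dom}B: By\in\operatorname{dom}A\}$, $\operatorname{dom}(BA)=\{x\in\operatorname{dom}A: Ax\in\operatorname{dom}B\}$. For a linear operator $S$ in a Banach space $\mathcal Z$: $\rho(S)$ is the set of $\lambda\in\mathbb C$ with $S-\lambda:\operatorname{dom}S\to\mathcal Z$ bijective and $(S-\lambda)^{-1}$ bounded; $\sigma(S)=\mathbb C\setminus\rho(S)$. For closed densely defined $S$: the approximate point spectrum $\sigma_{ap}(S)$ is the set of $\lambda$ for which there is a sequence $(x_n)\subset\operatorname{dom}S$, $\|x_n\|=1$, $(S-\lambda)x_n\to0$; the continuous spectrum $\sigma_c(S)$ is the set of $\lambda\in\sigma(S)$ with $S-\lambda$ injective and $\operatorname{ran}(S-\lambda)$ dense; the residual spectrum $\sigma_r(S)$ is the set of $\lambda$ with $S-\lambda$ injective and $\operatorname{ran}(S-\lambda)$ not dense. $S$ is upper semi-Fredholm if $\operatorname{ran}S$ is closed and $\ker S$ is finite-dimensional; lower semi-Fredholm if $\operatorname{ran}S$ is (closed and) of finite codimension; Fredholm if both. $\sigma_{ess}(S)=\{\lambda\in\mathbb C: S-\lambda \text{ is not Fredholm}\}$. *)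

(* Defs.v *)
From Stdlib Require Import Reals List.
Open Scope R_scope.

Record Cplx := mkC { Re : R; Im : R }.
Definition C0 : Cplx := mkC 0 0.
Definition C1 : Cplx := mkC 1 0.
Definition Cadd (a b : Cplx) : Cplx := mkC (Re a + Re b) (Im a + Im b).
Definition Cmul (a b : Cplx) : Cplx :=
  mkC (Re a * Re b - Im a * Im b) (Re a * Im b + Im a * Re b).
Definition Copp (a : Cplx) : Cplx := mkC (- Re a) (- Im a).
Definition Cabs (a : Cplx) : R := sqrt (Re a * Re a + Im a * Im a).

Record Banach := {
  carrier :> Type;
  vzero : carrier;
  vadd : carrier -> carrier -> carrier;
  vopp : carrier -> carrier;
  vscal : Cplx -> carrier -> carrier;
  vnorm : carrier -> R;
  vadd_assoc : forall x y z, vadd x (vadd y z) = vadd (vadd x y) z;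
  vadd_comm : forall x y, vadd x y = vadd y x;
  vadd_0 : forall x, vadd x vzero = x;
  vadd_opp : forall x, vadd x (vopp x) = vzero;
  vscal_1 : forall x, vscal C1 x = x;
  vscal_assoc : forall a b x, vscal a (vscal b x) = vscal (Cmul a b) x;
  vscal_distr_v : forall a x y, vscal a (vadd x y) = vadd (vscal a x) (vscal a y);
  vscal_distr_s : forall a b x, vscal (Cadd a b) x = vadd (vscal a x) (vscal b x);
  vnorm_nonneg : forall x, 0 <= vnorm x;
  vnorm_eq0 : forall x, vnorm x = 0 -> x = vzero;
  vnorm_scal : forall a x, vnorm (vscal a x) = Cabs a * vnorm x;
  vnorm_triangle : forall x y, vnorm (vadd x y) <= vnorm x + vnorm y;
  vcomplete : forall u : nat -> carrier,
    (forall eps, eps > 0 -> exists N, forall n m, (n >= N)%nat -> (m >= N)%nat ->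
        vnorm (vadd (u n) (vopp (u m))) < eps) ->
    exists l, forall eps, eps > 0 -> exists N, forall n, (n >= N)%nat ->
        vnorm (vadd (u n) (vopp l)) < eps
}.

Arguments vzero {_}.
Arguments vadd {_} _ _.
Arguments vopp {_} _.
Arguments vscal {_} _ _.
Arguments vnorm {_} _.

Definition vsub {X : Banach} (x y : X) : X := vadd x (vopp y).

Definition converges {X : Banach} (u : nat -> X) (l : X) : Prop :=
  forall eps, eps > 0 -> exists N, forall n, (n >= N)%nat -> vnorm (vsub (u n) l) < eps.

Definition is_closed_set {X : Banach} (S : X -> Prop) : Prop :=
  forall (u : nat -> X) (l : X), (forall n, S (u n)) -> converges u l -> S l.
Definition is_dense_set {X : Banach} (S : X -> Prop) : Prop :=
  forall (x : X) eps, eps > 0 -> exists z, S z /\ vnorm (vsub x z) < eps.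

Definition lincomb {X : Banach} (l : list (Cplx * X)) : X :=
  fold_right (fun p acc => vadd (vscal (fst p) (snd p)) acc) vzero l.

Definition in_span {X : Banach} (vs : list X) (x : X) : Prop :=
  exists cs : list Cplx, length cs = length vs /\ x = lincomb (combine cs vs).

Record LinOp (X Y : Banach) := {
  dom : X -> Prop;
  app : X -> Y;
  dom_0 : dom vzero;
  dom_add : forall x y, dom x -> dom y -> dom (vadd x y);
  dom_scal : forall a x, dom x -> dom (vscal a x);
  app_add : forall x y, dom x -> dom y -> app (vadd x y) = vadd (app x) (app y);
  app_scal : forall a x, dom x -> app (vscal a x) = vscal a (app x)
}.
Arguments dom {X Y} _ _.
Arguments app {X Y} _ _.

Definition closed_op {X Y : Banach} (T : LinOp X Y) : Prop :=
  forall (u : nat -> X) (x : X) (y : Y), (forall n, dom T (u n)) ->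
    converges u x -> converges (fun n => app T (u n)) y -> dom T x /\ app T x = y.

Definition densely_defined {X Y : Banach} (T : LinOp X Y) : Prop :=
  is_dense_set (dom T).

Definition prod_dom {X Y Z : Banach} (T : LinOp Y Z) (S : LinOp X Y) (x : X) : Prop :=
  dom S x /\ dom T (app S x).
Definition prod_app {X Y Z : Banach} (T : LinOp Y Z) (S : LinOp X Y) (x : X) : Z :=
  app T (app S x).

(** We treat operators in a space Z through their domain and action, so that
    S - lambda is (dom S, x |-> S x - lambda x). *)
Definition ran_shift {Z : Banach} (D : Z -> Prop) (f : Z -> Z) (lam : Cplx) (y : Z) : Prop :=
  exists x, D x /\ vsub (f x) (vscal lam x) = y.
Definition ker_shift {Z : Banach} (D : Z -> Prop) (f : Z -> Z) (lam : Cplx) (x : Z) : Prop :=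
  D x /\ vsub (f x) (vscal lam x) = vzero.
Definition injective_shift {Z : Banach} (D : Z -> Prop) (f : Z -> Z) (lam : Cplx) : Prop :=
  forall x1 x2, D x1 -> D x2 ->
    vsub (f x1) (vscal lam x1) = vsub (f x2) (vscal lam x2) -> x1 = x2.

Definition in_resolvent {Z : Banach} (D : Z -> Prop) (f : Z -> Z) (lam : Cplx) : Prop :=
  injective_shift D f lam /\ (forall y, ran_shift D f lam y) /\
  exists c : R, forall x, D x -> vnorm x <= c * vnorm (vsub (f x) (vscal lam x)).
Definition in_spectrum {Z : Banach} (D : Z -> Prop) (f : Z -> Z) (lam : Cplx) : Prop :=
  ~ in_resolvent D f lam.

Definition finite_dim_set {Z : Banach} (K : Z -> Prop) : Prop :=
  exists vs : list Z, forall x, K x -> in_span vs x.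
Definition finite_codim_set {Z : Banach} (M : Z -> Prop) : Prop :=
  exists vs : list Z, forall y, exists m w, M m /\ in_span vs w /\ y = vadd m w.
Definition upper_semi_fredholm {Z : Banach} (D : Z -> Prop) (f : Z -> Z) (lam : Cplx) : Prop :=
  is_closed_set (ran_shift D f lam) /\ finite_dim_set (ker_shift D f lam).
Definition lower_semi_fredholm {Z : Banach} (D : Z -> Prop) (f : Z -> Z) (lam : Cplx) : Prop :=
  is_closed_set (ran_shift D f lam) /\ finite_codim_set (ran_shift D f lam).
Definition fredholm {Z : Banach} (D : Z -> Prop) (f : Z -> Z) (lam : Cplx) : Prop :=
  upper_semi_fredholm D f lam /\ lower_semi_fredholm D f lam.

Definition in_sigma_ap {Z : Banach} (D : Z -> Prop) (f : Z -> Z) (lam : Cplx) : Prop :=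
  exists u : nat -> Z, (forall n, D (u n)) /\ (forall n, vnorm (u n) = 1) /\
    converges (fun n => vsub (f (u n)) (vscal lam (u n))) vzero.
Definition in_sigma_c {Z : Banach} (D : Z -> Prop) (f : Z -> Z) (lam : Cplx) : Prop :=
  in_spectrum D f lam /\ injective_shift D f lam /\ is_dense_set (ran_shift D f lam).
Definition in_sigma_r {Z : Banach} (D : Z -> Prop) (f : Z -> Z) (lam : Cplx) : Prop :=
  injective_shift D f lam /\ ~ is_dense_set (ran_shift D f lam).
Definition in_sigma_ess {Z : Banach} (D : Z -> Prop) (f : Z -> Z) (lam : Cplx) : Prop :=
  ~ fredholm D f lam.

(* Main.v *)
Require Import Defs.
From Stdlib Require Import Reals List.
From Stdlib Require Import Lra Lia ZArith Classical ClassicalEpsilon FunctionalExtensionality.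
Require Import Defs.
Open Scope R_scope.

Arguments vadd_assoc {_} _ _ _.
Arguments vadd_comm {_} _ _.
Arguments vadd_0 {_} _.
Arguments vadd_opp {_} _.
Arguments vscal_1 {_} _.
Arguments vscal_assoc {_} _ _ _.
Arguments vscal_distr_v {_} _ _ _.
Arguments vscal_distr_s {_} _ _ _.
Arguments vnorm_nonneg {_} _.
Arguments vnorm_eq0 {_} _ _.
Arguments vnorm_scal {_} _ _.
Arguments vnorm_triangle {_} _ _.
Arguments vcomplete {_} _ _.

Lemma Ceq (a b : Cplx) : Re a = Re b -> Im a = Im b -> a = b.
Proof. destruct a, b; simpl; intros; subst; reflexivity. Qed.

Ltac cring := apply Ceq; simpl; ring.

Definition Cr (t : R) : Cplx := mkC t 0.
Definition Cnorm2 (a : Cplx) := Re a * Re a + Im a * Im a.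
Definition Cinv (a : Cplx) : Cplx := mkC (Re a / Cnorm2 a) (- Im a / Cnorm2 a).

Lemma Cnorm2_pos a : a <> C0 -> Cnorm2 a > 0.
Proof.
  intro H. destruct a as [x y]. unfold Cnorm2; simpl.
  destruct (Req_dec x 0); destruct (Req_dec y 0); subst; try nra.
  exfalso; apply H; reflexivity.
Qed.

Lemma Cinv_r a : a <> C0 -> Cmul a (Cinv a) = C1.
Proof.
  intro H. pose proof (Cnorm2_pos a H). destruct a as [x y]. unfold Cinv, Cnorm2 in *; simpl in *.
  apply Ceq; simpl; field; lra.
Qed.

Lemma Cinv_l a : a <> C0 -> Cmul (Cinv a) a = C1.
Proof. intro H. rewrite <- (Cinv_r a H). cring. Qed.

Lemma Cinv_neq0 a : a <> C0 -> Cinv a <> C0.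
Proof. intros H E. pose proof (Cinv_r a H). rewrite E in H0. unfold Cmul, C0, C1 in H0; simpl in H0.
  injection H0; lra. Qed.

Lemma Cabs_nonneg a : 0 <= Cabs a.
Proof. apply sqrt_pos. Qed.

Lemma Cabs_mul a b : Cabs (Cmul a b) = Cabs a * Cabs b.
Proof.
  destruct a as [x y], b as [u v]. unfold Cabs; simpl. rewrite <- sqrt_mult by nra.
  f_equal; ring.
Qed.

Lemma Cabs_Cr t : Cabs (Cr t) = Rabs t.
Proof. unfold Cabs, Cr; simpl. replace (t*t+0*0) with (Rsqr t) by (unfold Rsqr; ring). apply sqrt_Rsqr_abs. Qed.

Lemma Cabs_C1 : Cabs C1 = 1.
Proof. change C1 with (Cr 1). rewrite Cabs_Cr. apply Rabs_R1. Qed.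

Lemma Cabs_opp a : Cabs (Copp a) = Cabs a.
Proof. destruct a; unfold Cabs; simpl; f_equal; ring. Qed.

Lemma Cabs_pos a : a <> C0 -> Cabs a > 0.
Proof. intro H. unfold Cabs. apply sqrt_lt_R0. apply (Cnorm2_pos a H). Qed.

Lemma Cabs_eq0 a : Cabs a = 0 -> a = C0.
Proof. intro H. destruct (classic (a = C0)); auto. pose proof (Cabs_pos a H0); lra. Qed.

Lemma Cabs_inv a : a <> C0 -> Cabs (Cinv a) = / Cabs a.
Proof. intro H. pose proof (Cabs_pos a H). pose proof (Cinv_r a H).
  assert (Cabs a * Cabs (Cinv a) = 1). { rewrite <- Cabs_mul, H1. apply Cabs_C1. }
  field_simplify_eq; lra. Qed.

Section V.
Context {X : Banach}.
Implicit Types x y z : X.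

Lemma vadd0l x : vadd vzero x = x.
Proof. rewrite vadd_comm; apply vadd_0. Qed.

Lemma vopp_l x : vadd (vopp x) x = vzero.
Proof. rewrite vadd_comm; apply vadd_opp. Qed.

Lemma vadd_cancel_l z x y : vadd z x = vadd z y -> x = y.
Proof. intro H. rewrite <- (vadd0l x), <- (vadd0l y), <- (vopp_l z), <- !vadd_assoc, H. reflexivity. Qed.

Lemma vadd_cancel_r z x y : vadd x z = vadd y z -> x = y.
Proof. rewrite (vadd_comm x), (vadd_comm y). apply vadd_cancel_l. Qed.

Lemma vscal0 x : vscal C0 x = vzero.
Proof.
  apply (vadd_cancel_l (vscal C0 x)). rewrite vadd_0, <- vscal_distr_s. f_equal. cring.
Qed.

Lemma vscal_zero a : vscal a (@vzero X) = vzero.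
Proof.
  apply (vadd_cancel_l (vscal a vzero)). rewrite vadd_0, <- vscal_distr_v, vadd_0. reflexivity.
Qed.

Lemma vopp_unique x y : vadd x y = vzero -> y = vopp x.
Proof. intro H. apply (vadd_cancel_l x). rewrite H, vadd_opp. reflexivity. Qed.

Lemma vopp_scal x : vopp x = vscal (Copp C1) x.
Proof. symmetry. apply vopp_unique. rewrite <- (vscal_1 x) at 1. rewrite <- vscal_distr_s.
  replace (Cadd C1 (Copp C1)) with C0 by cring. apply vscal0. Qed.

Lemma vopp_opp x : vopp (vopp x) = x.
Proof. symmetry. apply vopp_unique. apply vopp_l. Qed.

Lemma vopp_add x y : vopp (vadd x y) = vadd (vopp x) (vopp y).
Proof. rewrite !vopp_scal. apply vscal_distr_v. Qed.

Lemma vopp_zero : vopp (@vzero X) = vzero.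
Proof. rewrite vopp_scal. apply vscal_zero. Qed.

Lemma vscal_opp a x : vscal a (vopp x) = vopp (vscal a x).
Proof. rewrite !vopp_scal, !vscal_assoc. f_equal. cring. Qed.

Lemma vscal_Copp a x : vscal (Copp a) x = vopp (vscal a x).
Proof. rewrite !vopp_scal, !vscal_assoc. f_equal. cring. Qed.

Lemma vnorm0 : vnorm (@vzero X) = 0.
Proof. rewrite <- (vscal0 vzero), vnorm_scal. unfold Cabs, C0; simpl.
  replace (0*0+0*0) with 0 by ring. rewrite sqrt_0. ring. Qed.

Lemma vnorm_opp x : vnorm (vopp x) = vnorm x.
Proof. rewrite vopp_scal, vnorm_scal, Cabs_opp, Cabs_C1. ring. Qed.

Lemma vsub_self x : vsub x x = vzero.
Proof. apply vadd_opp. Qed.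

Lemma vsub_eq0 x y : vsub x y = vzero -> x = y.
Proof. unfold vsub. intro H. pose proof (vopp_unique _ _ H). rewrite <- (vopp_opp y), H0, vopp_opp. reflexivity. Qed.

Lemma vsub_add x y : vadd (vsub x y) y = x.
Proof. unfold vsub. rewrite <- vadd_assoc, vopp_l, vadd_0. reflexivity. Qed.

Lemma vnorm_sub_sym x y : vnorm (vsub x y) = vnorm (vsub y x).
Proof. unfold vsub. rewrite <- vnorm_opp, vopp_add, vopp_opp, vadd_comm. reflexivity. Qed.

Lemma vnorm_sub_tri x y z : vnorm (vsub x z) <= vnorm (vsub x y) + vnorm (vsub y z).
Proof.
  replace (vsub x z) with (vadd (vsub x y) (vsub y z)). apply vnorm_triangle.
  unfold vsub. rewrite <- vadd_assoc. f_equal. rewrite vadd_assoc, vopp_l, vadd0l. reflexivity.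
Qed.

Lemma vnorm_sub0 x : vsub x vzero = x.
Proof. unfold vsub. rewrite vopp_zero, vadd_0. reflexivity. Qed.

Lemma vscal_sub a x y : vscal a (vsub x y) = vsub (vscal a x) (vscal a y).
Proof. unfold vsub. rewrite vscal_distr_v, vscal_opp. reflexivity. Qed.

Lemma vsub_addsub x y u v : vsub (vadd x u) (vadd y v) = vadd (vsub x y) (vsub u v).
Proof. unfold vsub. rewrite vopp_add. rewrite !vadd_assoc. f_equal.
  rewrite <- !vadd_assoc. f_equal. apply vadd_comm. Qed.

Lemma vnorm_reverse x y : vnorm x - vnorm y <= vnorm (vsub x y).
Proof. pose proof (vnorm_triangle (vsub x y) y). rewrite vsub_add in H. lra. Qed.

Lemma vscal_1' x : vscal C1 x = x. Proof. apply vscal_1. Qed.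

Lemma vscal_inv_cancel a x : a <> C0 -> vscal (Cinv a) (vscal a x) = x.
Proof. intro H. rewrite vscal_assoc, Cinv_l by auto. apply vscal_1. Qed.

Lemma vscal_inv_cancel' a x : a <> C0 -> vscal a (vscal (Cinv a) x) = x.
Proof. intro H. rewrite vscal_assoc, Cinv_r by auto. apply vscal_1. Qed.

End V.

Inductive vexp := VAt (n : nat) | V0 | VAdd (a b : vexp) | VOpp (a : vexp) | VSub (a b : vexp) | VSc (c : Cplx) (a : vexp).

Fixpoint vden {X : Banach} (env : list X) (e : vexp) : X :=
  match e with
  | VAt n => nth n env vzero
  | V0 => vzero
  | VAdd a b => vadd (vden env a) (vden env b)
  | VOpp a => vopp (vden env a)
  | VSub a b => vsub (vden env a) (vden env b)
  | VSc c a => vscal c (vden env a)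
  end.

Fixpoint vco (e : vexp) (i : nat) : Cplx :=
  match e with
  | VAt n => if Nat.eqb n i then C1 else C0
  | V0 => C0
  | VAdd a b => Cadd (vco a i) (vco b i)
  | VOpp a => Copp (vco a i)
  | VSub a b => Cadd (vco a i) (Copp (vco b i))
  | VSc c a => Cmul c (vco a i)
  end.

Fixpoint vsum {X : Banach} (env : list X) (f : nat -> Cplx) (N : nat) : X :=
  match N with
  | O => vzero
  | S N => vadd (vsum env f N) (vscal (f N) (nth N env vzero))
  end.

Section R.
Context {X : Banach}.

Lemma vsum_add (env : list X) f g N : vsum env (fun i => Cadd (f i) (g i)) N = vadd (vsum env f N) (vsum env g N).
Proof.
  induction N; simpl. rewrite vadd_0; auto.
  rewrite IHN, vscal_distr_s. rewrite <- !vadd_assoc. f_equal. rewrite !vadd_assoc. f_equal. apply vadd_comm.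
Qed.

Lemma vsum_scal (env : list X) c f N : vsum env (fun i => Cmul c (f i)) N = vscal c (vsum env f N).
Proof.
  induction N; simpl. rewrite vscal_zero; auto.
  rewrite IHN, vscal_distr_v, vscal_assoc. auto.
Qed.

Lemma vsum_opp (env : list X) f N : vsum env (fun i => Copp (f i)) N = vopp (vsum env f N).
Proof.
  rewrite vopp_scal, <- vsum_scal. induction N; simpl; auto. rewrite IHN. f_equal. f_equal. cring.
Qed.

Lemma vsum_zero (env : list X) N : vsum env (fun _ => C0) N = vzero.
Proof. induction N; simpl; auto. rewrite IHN, vscal0, vadd_0; auto. Qed.

Lemma vsum_ext (env : list X) f g N : (forall i, (i < N)%nat -> f i = g i) -> vsum env f N = vsum env g N.
Proof. induction N; simpl; intros; auto. rewrite IHN, H; auto. Qed.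

Lemma vsum_atom (env : list X) n N : vsum env (fun i => if Nat.eqb n i then C1 else C0) N =
  if Nat.ltb n N then nth n env vzero else vzero.
Proof.
  induction N; simpl; auto. rewrite IHN.
  destruct (Nat.eqb n N) eqn:E.
  - apply Nat.eqb_eq in E; subst. rewrite Nat.ltb_irrefl. replace (N <? S N)%nat with true.
    rewrite vscal_1, vadd0l; auto. symmetry; apply Nat.ltb_lt; lia.
  - rewrite vscal0, vadd_0. apply Nat.eqb_neq in E.
    destruct (Nat.ltb n N) eqn:E2; destruct (Nat.ltb n (S N)) eqn:E3; auto;
    apply Nat.ltb_lt in E2 || apply Nat.ltb_nlt in E2; apply Nat.ltb_lt in E3 || apply Nat.ltb_nlt in E3; lia.
Qed.

Lemma vden_sum (env : list X) e : vden env e = vsum env (vco e) (length env).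
Proof.
  induction e; simpl.
  - rewrite vsum_atom. destruct (Nat.ltb n (length env)) eqn:E; auto.
    apply Nat.ltb_nlt in E. apply nth_overflow. lia.
  - symmetry; apply vsum_zero.
  - rewrite vsum_add, IHe1, IHe2; auto.
  - rewrite vsum_opp, IHe; auto.
  - rewrite vsum_add, vsum_opp, IHe1, IHe2; auto.
  - rewrite vsum_scal, IHe; auto.
Qed.

Lemma vring_lemma (env : list X) e1 e2 : (forall i, (i < length env)%nat -> vco e1 i = vco e2 i) ->
  vden env e1 = vden env e2.
Proof. intros. rewrite !vden_sum. apply vsum_ext; auto. Qed.

End R.

Ltac list_index t l :=
  lazymatch l with
  | t :: _ => constr:(0%nat)
  | _ :: ?l' => let n := list_index t l' in constr:(S n)
  end.

Ltac mem_atom t l :=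
  lazymatch l with
  | @nil _ => constr:(false)
  | t :: _ => constr:(true)
  | _ :: ?l' => mem_atom t l'
  end.

Ltac snoc l t :=
  lazymatch l with
  | @nil ?T => constr:(@cons T t (@nil T))
  | ?h :: ?l' => let r := snoc l' t in constr:(h :: r)
  end.

Ltac add_atom t env :=
  let b := mem_atom t env in
  lazymatch b with
  | true => env
  | false => snoc env t
  end.

Ltac reify env t :=
  lazymatch t with
  | vzero => constr:((V0, env))
  | vadd ?a ?b => let r1 := reify env a in lazymatch r1 with (?e1, ?env1) =>
                  let r2 := reify env1 b in lazymatch r2 with (?e2, ?env2) => constr:((VAdd e1 e2, env2)) end end
  | vsub ?a ?b => let r1 := reify env a in lazymatch r1 with (?e1, ?env1) =>
                  let r2 := reify env1 b in lazymatch r2 with (?e2, ?env2) => constr:((VSub e1 e2, env2)) end end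
  | vopp ?a => let r1 := reify env a in lazymatch r1 with (?e1, ?env1) => constr:((VOpp e1, env1)) end
  | vscal ?c ?a => let r1 := reify env a in lazymatch r1 with (?e1, ?env1) => constr:((VSc c e1, env1)) end
  | _ => let env' := add_atom t env in
         let n := list_index t env' in constr:((VAt n, env'))
  end.

Ltac cfield := apply Ceq; cbv [Cinv Cnorm2 Cadd Cmul Copp C1 C0 Cr Re Im]; field;
  repeat match goal with H : _ <> 0 |- _ => revert H end; auto.

Ltac vring_core :=
  lazymatch goal with
  | |- @eq (carrier ?X) ?l ?r =>
    let r1 := reify (@nil (carrier X)) l in lazymatch r1 with (?e1, ?env1) =>
    let r2 := reify env1 r in lazymatch r2 with (?e2, ?env2) =>
      change (vden env2 e1 = vden env2 e2); apply vring_lemma; simpl length;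
      let i := fresh "i" in let Hi := fresh "Hi" in intros i Hi;
      repeat (first [exfalso; lia | destruct i as [|i]; [simpl; try solve [cring]; try solve [cfield] | ]])
    end end
  end.

Ltac vring := vring_core.

Section T.
Context {X : Banach}.
Lemma test (z1 z2 h x0 : X) : vsub (vsub z1 z2) h = vsub (vsub z1 (vadd x0 h)) (vsub z2 x0).
Proof. vring. Qed.
Lemma test2 (x y : X) (a b : Cplx) : vscal a (vadd x y) = vadd (vscal a y) (vscal (Cadd a C0) x).
Proof. vring. Qed.
End T.

Section C.
Context {X : Banach}.

Lemma conv_const (l : X) : converges (fun _ => l) l.
Proof. intros e He. exists 0%nat. intros. rewrite vsub_self, vnorm0. lra. Qed.

Lemma conv_add (u v : nat -> X) a b : converges u a -> converges v b ->
  converges (fun n => vadd (u n) (v n)) (vadd a b).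
Proof.
  intros Hu Hv e He. destruct (Hu (e/2)) as [N1 H1]; try lra. destruct (Hv (e/2)) as [N2 H2]; try lra.
  exists (N1+N2)%nat. intros n Hn. rewrite vsub_addsub.
  pose proof (vnorm_triangle (vsub (u n) a) (vsub (v n) b)).
  specialize (H1 n ltac:(lia)). specialize (H2 n ltac:(lia)). lra.
Qed.

Lemma conv_scal (u : nat -> X) a c : converges u a ->
  converges (fun n => vscal c (u n)) (vscal c a).
Proof.
  intros Hu e He. pose proof (Cabs_nonneg c).
  destruct (Hu (e / (Cabs c + 1))) as [N H1]. apply Rdiv_lt_0_compat; lra.
  exists N. intros n Hn. rewrite <- vscal_sub, vnorm_scal. specialize (H1 n Hn).
  pose proof (vnorm_nonneg (vsub (u n) a)).
  apply Rle_lt_trans with ((Cabs c + 1) * vnorm (vsub (u n) a)). nra.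
  replace e with ((Cabs c + 1) * (e / (Cabs c + 1))) by (field; lra).
  apply Rmult_lt_compat_l; lra.
Qed.

Lemma conv_ext (u v : nat -> X) a : (forall n, u n = v n) -> converges u a -> converges v a.
Proof. intros E H e He. destruct (H e He) as [N HN]. exists N; intros; rewrite <- E; auto. Qed.

Lemma conv_opp (u : nat -> X) a : converges u a -> converges (fun n => vopp (u n)) (vopp a).
Proof. intro H. rewrite vopp_scal. apply (conv_ext (fun n => vscal (Copp C1) (u n))). intro; symmetry; apply vopp_scal. apply conv_scal; auto. Qed.

Lemma conv_sub (u v : nat -> X) a b : converges u a -> converges v b ->
  converges (fun n => vsub (u n) (v n)) (vsub a b).
Proof. intros. unfold vsub. apply conv_add; auto. apply conv_opp; auto. Qed.


Lemma conv_0_norm (u : nat -> X) : converges u vzero <->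
  (forall e, e > 0 -> exists N, forall n, (n >= N)%nat -> vnorm (u n) < e).
Proof. unfold converges. split; intros H e He; destruct (H e He) as [N HN]; exists N; intros n Hn;
  specialize (HN n Hn); rewrite vnorm_sub0 in *; auto. Qed.

Lemma conv_unique (u : nat -> X) a b : converges u a -> converges u b -> a = b.
Proof.
  intros Ha Hb. apply vsub_eq0, vnorm_eq0. pose proof (vnorm_nonneg (vsub a b)).
  destruct (Rle_lt_or_eq_dec _ _ H); auto. exfalso.
  set (e := vnorm (vsub a b)) in *.
  destruct (Ha (e/2)) as [N1 H1]; try lra. destruct (Hb (e/2)) as [N2 H2]; try lra.
  specialize (H1 (N1+N2)%nat ltac:(lia)). specialize (H2 (N1+N2)%nat ltac:(lia)).
  pose proof (vnorm_sub_tri a (u (N1+N2)%nat) b). rewrite (vnorm_sub_sym a (u _)) in H0. fold e in H0. lra.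
Qed.

Lemma conv_norm_le (u : nat -> X) a M : converges u a -> (forall n, vnorm (u n) <= M) -> vnorm a <= M.
Proof.
  intros H HM. apply Rnot_lt_le. intro C.
  destruct (H (vnorm a - M)) as [N HN]; try lra. specialize (HN N (le_n _)). specialize (HM N).
  pose proof (vnorm_reverse a (u N)). rewrite vnorm_sub_sym in H0. lra.
Qed.

Lemma conv_norm_le_ev (u : nat -> X) a M N0 : converges u a -> (forall n, (n >= N0)%nat -> vnorm (u n) <= M) -> vnorm a <= M.
Proof.
  intros H HM. apply (conv_norm_le (fun n => u (n + N0)%nat)). 
  intros e He. destruct (H e He) as [N HN]. exists N. intros. apply HN. lia.
  intros. apply HM. lia.
Qed.

Lemma cauchy_conv (u : nat -> X) :
  (forall eps, eps > 0 -> exists N, forall n m, (n >= N)%nat -> (m >= N)%nat -> vnorm (vsub (u n) (u m)) < eps) ->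
  exists l, converges u l.
Proof. intro H. destruct (vcomplete u H) as [l Hl]. exists l. exact Hl. Qed.

Lemma conv_shift (u : nat -> X) a k : converges u a -> converges (fun n => u (n + k)%nat) a.
Proof. intros H e He. destruct (H e He) as [N HN]. exists N. intros. apply HN. lia. Qed.

End C.

Lemma conv_bounded {X Y : Banach} (F : X -> Y) C (u : nat -> X) a :
  (forall x y, F (vsub x y) = vsub (F x) (F y)) -> (forall x, vnorm (F x) <= C * vnorm x) ->
  converges u a -> converges (fun n => F (u n)) (F a).
Proof.
  intros Hl HC H e He. 
  assert (C0p : 0 <= C \/ C < 0) by lra.
  destruct (H (e / (Rabs C + 1))) as [N HN]. apply Rdiv_lt_0_compat; try lra. pose proof (Rabs_pos C); lra.
  exists N. intros n Hn. rewrite <- Hl. specialize (HN n Hn). specialize (HC (vsub (u n) a)).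
  pose proof (Rabs_pos C). pose proof (Rle_abs C). pose proof (vnorm_nonneg (vsub (u n) a)).
  apply Rle_lt_trans with ((Rabs C + 1) * vnorm (vsub (u n) a)). nra.
  replace e with ((Rabs C + 1) * (e / (Rabs C + 1))) by (field; lra).
  apply Rmult_lt_compat_l; lra.
Qed.

Lemma nat_arch (x : R) : exists n : nat, x < INR n.
Proof.
  destruct (archimed (Rabs x)) as [H1 H2]. exists (Z.to_nat (up (Rabs x))).
  rewrite INR_IZR_INZ, Z2Nat.id. pose proof (Rle_abs x); lra.
  apply le_IZR. pose proof (Rabs_pos x). lra.
Qed.

Lemma half_pow_small (e : R) : e > 0 -> exists N, forall n, (n >= N)%nat -> (1/2)^n < e.
Proof.
  intro He. destruct (pow_lt_1_zero (1/2)) with (y := e) as [N HN]. rewrite Rabs_pos_eq; lra. lra.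
  exists N. intros n Hn. specialize (HN n Hn). rewrite Rabs_pos_eq in HN; auto. apply pow_le; lra.
Qed.

Lemma half_pow_pos k : 0 < (1/2)^k.
Proof. apply pow_lt; lra. Qed.

Lemma vnorm_sub_le {X : Banach} (a b : X) : vnorm (vsub a b) <= vnorm a + vnorm b.
Proof. unfold vsub. rewrite <- (vnorm_opp b). apply vnorm_triangle. Qed.

Lemma vnorm_zero_eq {X : Banach} (x : X) : vnorm x = 0 -> x = vzero.
Proof. apply vnorm_eq0. Qed.

Section CG.
Context {X Y : Banach}.
Variable F : X -> Y.

Lemma baire_level :
  exists (n : nat) (x0 : X) (r : R), r > 0 /\ forall x, vnorm (vsub x x0) < r ->
     forall d, d > 0 -> exists z, vnorm (vsub z x) < d /\ vnorm (F z) <= INR n.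
Proof.
  apply NNPP. intro H.
  assert (Hh : forall n x0 r, r > 0 -> exists x d, vnorm (vsub x x0) < r /\ d > 0 /\
              forall z, vnorm (vsub z x) < d -> vnorm (F z) > INR n).
  { intros n x0 r Hr. apply NNPP. intro H1. apply H. exists n, x0, r. split; auto.
    intros x Hx d Hd. apply NNPP. intro H2. apply H1. exists x, d. split; auto. split; auto.
    intros z Hz. apply Rnot_le_gt. intro H3. apply H2. exists z. split; auto. }
  assert (Hstep : forall (n : nat) (p : X * R), exists q : X * R, snd p > 0 ->
     (snd q > 0 /\ snd q <= snd p / 2 /\ vnorm (vsub (fst q) (fst p)) + snd q < snd p /\
      forall z, vnorm (vsub z (fst q)) <= snd q -> vnorm (F z) > INR n)).
  { intros n [x0 r]. simpl. destruct (classic (r > 0)) as [Hr|Hr].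
    - destruct (Hh n x0 (r/2)) as [x [d [H1 [H2 H3]]]]. lra.
      exists (x, Rmin (d/2) (r/4)). simpl. intros _.
      pose proof (Rmin_l (d/2) (r/4)). pose proof (Rmin_r (d/2) (r/4)).
      assert (Rmin (d/2) (r/4) > 0) by (apply Rmin_glb_lt; lra).
      split; auto. split. lra. split. lra. intros z Hz. apply H3. lra.
    - exists (x0, r). intro; contradiction. }
  set (stp := fun n p => proj1_sig (constructive_indefinite_description _ (Hstep n p))).
  assert (Hstp : forall n p, snd p > 0 -> (snd (stp n p) > 0 /\ snd (stp n p) <= snd p / 2 /\
      vnorm (vsub (fst (stp n p)) (fst p)) + snd (stp n p) < snd p /\
      forall z, vnorm (vsub z (fst (stp n p))) <= snd (stp n p) -> vnorm (F z) > INR n)).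
  { intros n p. unfold stp. destruct (constructive_indefinite_description _ (Hstep n p)) as [q Hq]. simpl. auto. }
  set (sq := fix sq (k : nat) : X * R := match k with O => (vzero, 1) | S k => stp k (sq k) end).
  assert (Hpos : forall k, snd (sq k) > 0).
  { induction k. simpl; lra. change (sq (S k)) with (stp k (sq k)). apply Hstp; auto. }
  assert (HS : forall k, snd (sq (S k)) > 0 /\ snd (sq (S k)) <= snd (sq k) / 2 /\
      vnorm (vsub (fst (sq (S k))) (fst (sq k))) + snd (sq (S k)) < snd (sq k) /\
      forall z, vnorm (vsub z (fst (sq (S k)))) <= snd (sq (S k)) -> vnorm (F z) > INR k).
  { intro k. change (sq (S k)) with (stp k (sq k)). apply Hstp; auto. }
  set (c := fun k => fst (sq k)). set (r := fun k => snd (sq k)).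
  assert (Hnest : forall j k, vnorm (vsub (c (j+k)%nat) (c k)) + r (j+k)%nat <= r k).
  { induction j; intro k. simpl. rewrite vsub_self, vnorm0. lra.
    change (S j + k)%nat with (S (j + k)). specialize (IHj k). destruct (HS (j+k)%nat) as [_ [_ [H3 _]]].
    pose proof (vnorm_sub_tri (c (S (j+k))) (c (j+k)%nat) (c k)). unfold c, r in *. lra. }
  assert (Hr : forall k, r k <= (1/2)^k).
  { induction k. unfold r; simpl; lra. destruct (HS k) as [_ [H2 _]]. unfold r in *. change ((1/2)^(S k)) with (1/2 * (1/2)^k). lra. }
  assert (Hrp : forall k, 0 < r k) by (intro; apply Hpos).
  assert (Hle : forall m k, (m >= k)%nat -> vnorm (vsub (c m) (c k)) <= r k).
  { intros m k Hmk. replace m with ((m - k) + k)%nat by lia. specialize (Hnest (m-k)%nat k).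
    specialize (Hrp ((m-k)+k)%nat). lra. }
  destruct (cauchy_conv c) as [l Hl].
  { intros e He. destruct (half_pow_small (e/2)) as [N HN]. lra. exists N. intros n m Hn Hm.
    pose proof (vnorm_sub_tri (c n) (c N) (c m)). rewrite (vnorm_sub_sym (c N) (c m)) in H0.
    pose proof (Hle n N Hn). pose proof (Hle m N Hm). specialize (Hr N). specialize (HN N (le_n _)). lra. }
  assert (Hlk : forall k, vnorm (vsub l (c k)) <= r k).
  { intro k. apply (conv_norm_le_ev (fun m => vsub (c m) (c k)) _ _ k).
    apply conv_sub; auto. apply conv_const. intros m Hm. apply Hle; lia. }
  assert (Hbig : forall k, vnorm (F l) > INR k).
  { intro k. destruct (HS k) as [_ [_ [_ H4]]]. apply H4. apply Hlk. }
  destruct (nat_arch (vnorm (F l))) as [k Hk]. specialize (Hbig k). lra.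
Qed.

End CG.

Lemma closed_graph {X Y : Banach} (F : X -> Y) :
  (forall x y, F (vadd x y) = vadd (F x) (F y)) ->
  (forall a x, F (vscal a x) = vscal a (F x)) ->
  (forall u x y, converges u x -> converges (fun n => F (u n)) y -> F x = y) ->
  exists C, 0 <= C /\ forall x, vnorm (F x) <= C * vnorm x.
Proof.
  intros Fadd Fscal Fcl.
  assert (F0 : F vzero = vzero). { rewrite <- (vscal0 vzero), Fscal, !vscal0. reflexivity. }
  assert (Fsub : forall x y, F (vsub x y) = vsub (F x) (F y)).
  { intros. unfold vsub. rewrite Fadd, !vopp_scal, Fscal. reflexivity. }
  destruct (baire_level F) as [n [x0 [r [Hr HE]]]].
  assert (Happ : forall h, vnorm h < r -> forall d, d > 0 -> exists z, vnorm (vsub z h) < d /\ vnorm (F z) <= 2 * INR n).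
  { intros h Hh d Hd.
    destruct (HE (vadd x0 h)) with (d := d/2) as [z1 [H1 H2]].
    replace (vsub (vadd x0 h) x0) with h by vring. auto. lra.
    destruct (HE x0) with (d := d/2) as [z2 [H3 H4]]. rewrite vsub_self, vnorm0; auto. lra.
    exists (vsub z1 z2). split.
    replace (vsub (vsub z1 z2) h) with (vsub (vsub z1 (vadd x0 h)) (vsub z2 x0)) by vring.
    pose proof (vnorm_sub_le (vsub z1 (vadd x0 h)) (vsub z2 x0)). lra.
    rewrite Fsub. pose proof (vnorm_sub_le (F z1) (F z2)). lra. }
  set (M := 4 * INR n / r).
  assert (HM : 0 <= M). { unfold M. pose proof (pos_INR n). apply Rmult_le_pos. lra. left; apply Rinv_0_lt_compat; lra. }
  assert (Happ2 : forall h d, d > 0 -> exists z, vnorm (vsub z h) < d /\ vnorm (F z) <= M * vnorm h).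
  { intros h d Hd. destruct (Req_dec (vnorm h) 0) as [E|E].
    - apply vnorm_eq0 in E. subst h. exists vzero. rewrite vsub_self, vnorm0, F0, vnorm0. split; lra.
    - pose proof (vnorm_nonneg h). set (nh := vnorm h) in *. assert (Hnh : nh > 0) by lra.
      set (t := r / (2 * nh)). assert (Ht : t > 0) by (unfold t; apply Rdiv_lt_0_compat; lra).
      destruct (Happ (vscal (Cr t) h)) with (d := t * d) as [z' [H1 H2]].
      rewrite vnorm_scal, Cabs_Cr, Rabs_pos_eq by lra. fold nh. unfold t. field_simplify; lra.
      apply Rmult_lt_0_compat; lra.
      exists (vscal (Cr (/t)) z'). split.
      + replace (vsub (vscal (Cr (/ t)) z') h) with (vscal (Cr (/t)) (vsub z' (vscal (Cr t) h))).
        rewrite vnorm_scal, Cabs_Cr, Rabs_pos_eq.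
        apply Rmult_lt_reg_l with t; auto. field_simplify; try lra. 
        left; apply Rinv_0_lt_compat; auto.
        rewrite vscal_sub, vscal_assoc. replace (Cmul (Cr (/ t)) (Cr t)) with C1. rewrite vscal_1; auto.
        apply Ceq; simpl; field; lra.
      + rewrite Fscal, vnorm_scal, Cabs_Cr, Rabs_pos_eq.
        apply Rle_trans with (/ t * (2 * INR n)). apply Rmult_le_compat_l; auto. left; apply Rinv_0_lt_compat; auto.
        unfold M, t. right. fold nh. field. lra. left; apply Rinv_0_lt_compat; auto. }
  assert (Hg : forall (p : X * R), exists z, snd p > 0 -> vnorm (vsub z (fst p)) < snd p /\ vnorm (F z) <= M * vnorm (fst p)).
  { intros [h d]. simpl. destruct (classic (d > 0)). destruct (Happ2 h d H) as [z Hz]. exists z; auto.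
    exists vzero; intro; contradiction. }
  set (g := fun p => proj1_sig (constructive_indefinite_description _ (Hg p))).
  assert (Hgs : forall h d, d > 0 -> vnorm (vsub (g (h, d)) h) < d /\ vnorm (F (g (h, d))) <= M * vnorm h).
  { intros h d Hd. unfold g. destruct (constructive_indefinite_description _ (Hg (h, d))) as [z Hz]. simpl. apply Hz; auto. }
  exists (2 * M). split. lra. intro x.
  destruct (Req_dec (vnorm x) 0) as [E|E].
  { rewrite E. apply vnorm_eq0 in E. subst. rewrite F0, vnorm0. lra. }
  pose proof (vnorm_nonneg x). set (nx := vnorm x) in *. assert (Hnx : nx > 0) by lra.
  set (hs := fix hs (k : nat) : X := match k with O => x | S k => vsub (hs k) (g (hs k, nx * (1/2)^(S k))) end).
  set (z := fun k => g (hs k, nx * (1/2)^(S k))).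
  assert (Hhs : forall k, vnorm (hs k) <= nx * (1/2)^k /\ vnorm (F (z k)) <= M * nx * (1/2)^k).
  { induction k.
    - change (hs 0%nat) with x. simpl. split. unfold nx; lra. 
      destruct (Hgs x (nx * (1/2 * 1))) as [_ H2]. lra.
      unfold z. change (hs 0%nat) with x. simpl. unfold nx in *. lra.
    - destruct IHk as [IH1 IH2].
      assert (Hd : nx * (1/2)^(S k) > 0) by (pose proof (half_pow_pos (S k)); nra).
      destruct (Hgs (hs k) _ Hd) as [H1 H2].
      assert (E1 : vnorm (hs (S k)) <= nx * (1/2)^(S k)).
      { change (hs (S k)) with (vsub (hs k) (g (hs k, nx * (1/2)^(S k)))). rewrite vnorm_sub_sym. lra. }
      split; auto.
      assert (Hd2 : nx * (1/2)^(S (S k)) > 0) by (pose proof (half_pow_pos (S (S k))); nra).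
      destruct (Hgs (hs (S k)) _ Hd2) as [_ H4]. unfold z.
      apply Rle_trans with (M * vnorm (hs (S k))). auto. rewrite Rmult_assoc. apply Rmult_le_compat_l; auto. }
  set (s := fix s (k : nat) : X := match k with O => vzero | S k => vadd (s k) (z k) end).
  assert (Hs : forall k, s k = vsub x (hs k)).
  { induction k. simpl. vring. change (s (S k)) with (vadd (s k) (z k)). rewrite IHk.
    change (hs (S k)) with (vsub (hs k) (z k)). vring. }
  assert (Hsx : converges s x).
  { intros e He. destruct (half_pow_small (e / nx)) as [N HN]. apply Rdiv_lt_0_compat; lra.
    exists N. intros k Hk. rewrite Hs. replace (vsub (vsub x (hs k)) x) with (vopp (hs k)) by vring.
    rewrite vnorm_opp. destruct (Hhs k) as [H1 _]. specialize (HN k Hk).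
    apply Rle_lt_trans with (nx * (1/2)^k); auto. replace e with (nx * (e/nx)) by (field; lra).
    apply Rmult_lt_compat_l; lra. }
  assert (HFs : forall j k, vnorm (vsub (F (s (j + k)%nat)) (F (s k))) <= 2 * M * nx * ((1/2)^k - (1/2)^(j+k))).
  { induction j; intro k.
    - simpl. rewrite vsub_self, vnorm0. lra.
    - change (s (S j + k)%nat) with (vadd (s (j + k)%nat) (z (j+k)%nat)). rewrite Fadd.
      replace (vsub (vadd (F (s (j + k)%nat)) (F (z (j + k)%nat))) (F (s k)))
        with (vadd (vsub (F (s (j + k)%nat)) (F (s k))) (F (z (j + k)%nat))) by vring.
      eapply Rle_trans. apply vnorm_triangle. specialize (IHj k). destruct (Hhs (j+k)%nat) as [_ H2].
      change ((1/2)^(S j + k)) with (1/2 * (1/2)^(j+k)). lra. }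
  destruct (cauchy_conv (fun k => F (s k))) as [y Hy].
  { intros e He. assert (HK : 0 <= 2 * M * nx) by (assert (0 <= M*nx) by (apply Rmult_le_pos; lra); lra).
    set (K := 2 * M * nx) in *.
    destruct (half_pow_small (e / (2 * K + 1))) as [N HN]. apply Rdiv_lt_0_compat; lra.
    assert (HB : forall m, (m >= N)%nat -> vnorm (vsub (F (s m)) (F (s N))) <= K * (1/2)^N).
    { intros m Hm. replace m with ((m - N) + N)%nat by lia. pose proof (HFs (m-N)%nat N).
      pose proof (half_pow_pos (m - N + N)).
      assert (0 <= K*(1/2)^(m-N+N)) by (apply Rmult_le_pos; lra). unfold K in *. lra. }
    exists N. intros n1 m Hn Hm. pose proof (vnorm_sub_tri (F (s n1)) (F (s N)) (F (s m))).
    rewrite (vnorm_sub_sym (F (s N))) in H0. pose proof (HB n1 Hn). pose proof (HB m Hm).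
    specialize (HN N (le_n _)). pose proof (half_pow_pos N).
    assert ((1/2)^N * (2 * K + 1) < e). 
    { replace e with (e / (2 * K + 1) * (2 * K + 1)) by (field; lra). apply Rmult_lt_compat_r; lra. }
    nra. }
  rewrite (Fcl s x y Hsx Hy).
  apply (conv_norm_le _ _ _ Hy). intro k. pose proof (HFs k 0%nat). simpl in H0.
  replace (k+0)%nat with k in H0 by lia. simpl in H0. rewrite F0, vnorm_sub0 in H0.
  pose proof (half_pow_pos k). assert (0 <= M*nx) by (apply Rmult_le_pos; lra). unfold nx in *. nra.
Qed.

Definition lin_pair {Z : Banach} (D : Z -> Prop) (f : Z -> Z) : Prop :=
  D vzero /\ (forall x y, D x -> D y -> D (vadd x y)) /\ (forall a x, D x -> D (vscal a x)) /\
  (forall x y, D x -> D y -> f (vadd x y) = vadd (f x) (f y)) /\ (forall a x, D x -> f (vscal a x) = vscal a (f x)).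

Definition sh {Z : Banach} (f : Z -> Z) (mu : Cplx) (x : Z) : Z := vsub (f x) (vscal mu x).

Lemma app_zero {X Y : Banach} (T : LinOp X Y) : app T vzero = vzero.
Proof. pose proof (app_scal _ _ T C0 vzero (dom_0 _ _ T)). rewrite !vscal0 in H. auto. Qed.

Lemma app_sub {X Y : Banach} (T : LinOp X Y) x y : dom T x -> dom T y -> app T (vsub x y) = vsub (app T x) (app T y).
Proof. intros. unfold vsub. rewrite app_add, !vopp_scal, app_scal; auto. rewrite vopp_scal. apply dom_scal; auto. Qed.

Lemma dom_sub {X Y : Banach} (T : LinOp X Y) x y : dom T x -> dom T y -> dom T (vsub x y).
Proof. intros. unfold vsub. apply dom_add; auto. rewrite vopp_scal. apply dom_scal; auto. Qed.

Lemma prod_lin {X Y : Banach} (A : LinOp X Y) (B : LinOp Y X) : lin_pair (prod_dom A B) (prod_app A B).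
Proof.
  unfold lin_pair, prod_dom, prod_app. split; [|split; [|split; [|split]]].
  - split. apply dom_0. rewrite app_zero. apply dom_0.
  - intros x y [H1 H2] [H3 H4]. split. apply dom_add; auto. rewrite app_add; auto. apply dom_add; auto.
  - intros a x [H1 H2]. split. apply dom_scal; auto. rewrite app_scal; auto. apply dom_scal; auto.
  - intros x y [H1 H2] [H3 H4]. rewrite !app_add; auto.
  - intros a x [H1 H2]. rewrite !app_scal; auto.
Qed.

Section G.
Context {Z : Banach}.
Variables (D : Z -> Prop) (f : Z -> Z).
Hypothesis HL : lin_pair D f.

Lemma lp_0 : D vzero. Proof. apply HL. Qed.
Lemma lp_add x y : D x -> D y -> D (vadd x y). Proof. apply HL. Qed.
Lemma lp_scal a x : D x -> D (vscal a x). Proof. apply HL. Qed.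
Lemma lp_sub x y : D x -> D y -> D (vsub x y).
Proof. intros. unfold vsub. apply lp_add; auto. rewrite vopp_scal. apply lp_scal; auto. Qed.
Lemma lp_fadd x y : D x -> D y -> f (vadd x y) = vadd (f x) (f y). Proof. apply HL. Qed.
Lemma lp_fscal a x : D x -> f (vscal a x) = vscal a (f x). Proof. apply HL. Qed.
Lemma lp_fsub x y : D x -> D y -> f (vsub x y) = vsub (f x) (f y).
Proof. intros. unfold vsub. rewrite lp_fadd, !vopp_scal, lp_fscal; auto. rewrite vopp_scal. apply lp_scal; auto. Qed.
Lemma lp_f0 : f vzero = vzero.
Proof. pose proof (lp_fscal C0 vzero lp_0). rewrite !vscal0 in H. auto. Qed.

Lemma sh_add mu x y : D x -> D y -> sh f mu (vadd x y) = vadd (sh f mu x) (sh f mu y).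
Proof. intros. unfold sh. rewrite lp_fadd; auto. vring. Qed.
Lemma sh_scal mu a x : D x -> sh f mu (vscal a x) = vscal a (sh f mu x).
Proof. intros. unfold sh. rewrite lp_fscal; auto. vring. Qed.
Lemma sh_sub mu x y : D x -> D y -> sh f mu (vsub x y) = vsub (sh f mu x) (sh f mu y).
Proof. intros. unfold sh. rewrite lp_fsub; auto. vring. Qed.
Lemma sh_0 mu : sh f mu vzero = vzero.
Proof. unfold sh. rewrite lp_f0. vring. Qed.

Lemma ran_0 mu : ran_shift D f mu vzero.
Proof. exists vzero. split. apply lp_0. apply sh_0. Qed.
Lemma ran_add mu x y : ran_shift D f mu x -> ran_shift D f mu y -> ran_shift D f mu (vadd x y).
Proof. intros [u [Hu E1]] [v [Hv E2]]. exists (vadd u v). split. apply lp_add; auto.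
  rewrite <- E1, <- E2. apply sh_add; auto. Qed.
Lemma ran_scal mu a x : ran_shift D f mu x -> ran_shift D f mu (vscal a x).
Proof. intros [u [Hu E1]]. exists (vscal a u). split. apply lp_scal; auto. rewrite <- E1. apply sh_scal; auto. Qed.
Lemma ran_sub mu x y : ran_shift D f mu x -> ran_shift D f mu y -> ran_shift D f mu (vsub x y).
Proof. intros [u [Hu E1]] [v [Hv E2]]. exists (vsub u v). split. apply lp_sub; auto.
  rewrite <- E1, <- E2. apply sh_sub; auto. Qed.
Lemma ran_sh mu x : D x -> ran_shift D f mu (sh f mu x).
Proof. intros. exists x. split; auto. Qed.

Lemma resolvent_fun mu : in_resolvent D f mu ->
  exists Rf : Z -> Z, (forall y, D (Rf y) /\ sh f mu (Rf y) = y) /\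
     (forall x, D x -> Rf (sh f mu x) = x) /\
     (forall x y, Rf (vadd x y) = vadd (Rf x) (Rf y)) /\ (forall a x, Rf (vscal a x) = vscal a (Rf x)) /\
     exists c, 0 <= c /\ forall y, vnorm (Rf y) <= c * vnorm y.
Proof.
  intros [Hinj [Hsur [c Hc]]].
  set (Rf := fun y => proj1_sig (constructive_indefinite_description _ (Hsur y))).
  assert (H1 : forall y, D (Rf y) /\ sh f mu (Rf y) = y).
  { intro y. unfold Rf. destruct (constructive_indefinite_description _ (Hsur y)) as [x Hx]. simpl. auto. }
  assert (H2 : forall x, D x -> Rf (sh f mu x) = x).
  { intros x Hx. destruct (H1 (sh f mu x)) as [Ha Hb]. apply Hinj; auto. }
  exists Rf. split; auto. split; auto. split; [|split].
  - intros x y. destruct (H1 x) as [Ha Hb]. destruct (H1 y) as [Hc' Hd].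
    rewrite <- (H2 (vadd (Rf x) (Rf y))). rewrite sh_add, Hb, Hd; auto. apply lp_add; auto.
  - intros a x. destruct (H1 x) as [Ha Hb]. rewrite <- (H2 (vscal a (Rf x))). rewrite sh_scal, Hb; auto.
    apply lp_scal; auto.
  - exists (Rmax c 0). split. apply Rmax_r. intro y. destruct (H1 y) as [Ha Hb].
    specialize (Hc (Rf y) Ha). fold (sh f mu (Rf y)) in Hc. rewrite Hb in Hc.
    pose proof (vnorm_nonneg y). pose proof (Rmax_l c 0).
    eapply Rle_trans. apply Hc. apply Rmult_le_compat_r; auto.
Qed.

End G.

Section Sp.
Context {X : Banach}.

Lemma span_nil (x : X) : in_span nil x <-> x = vzero.
Proof. split. intros [cs [H1 H2]]. destruct cs; simpl in *. unfold lincomb in H2. simpl in H2. auto. discriminate.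
  intro; subst. exists nil. simpl. auto. Qed.

Lemma span_cons (v : X) vs x : in_span (v :: vs) x <-> exists c w, in_span vs w /\ x = vadd (vscal c v) w.
Proof. split.
  - intros [cs [H1 H2]]. destruct cs as [|c cs]; simpl in *. discriminate.
    exists c, (lincomb (combine cs vs)). split. exists cs. split; auto. rewrite H2. reflexivity.
  - intros [c [w [[cs [H1 H2]] E]]]. exists (c :: cs). simpl. split; auto. subst. reflexivity.
Qed.

Lemma span_0 (vs : list X) : in_span vs vzero.
Proof. induction vs. apply span_nil; auto. apply span_cons. exists C0, vzero. split; auto. rewrite vscal0, vadd_0. auto. Qed.

Lemma span_add (vs : list X) x y : in_span vs x -> in_span vs y -> in_span vs (vadd x y).
Proof. revert x y. induction vs; intros x y Hx Hy.
  - apply span_nil in Hx; apply span_nil in Hy; subst. apply span_nil. apply vadd_0.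
  - apply span_cons in Hx as [c [w [Hw E]]]. apply span_cons in Hy as [d [u [Hu E']]]. subst.
    apply span_cons. exists (Cadd c d), (vadd w u). split. apply IHvs; auto. vring.
Qed.

Lemma span_scal (vs : list X) a x : in_span vs x -> in_span vs (vscal a x).
Proof. revert x. induction vs; intros x Hx.
  - apply span_nil in Hx; subst. apply span_nil. apply vscal_zero.
  - apply span_cons in Hx as [c [w [Hw E]]]. subst. apply span_cons. exists (Cmul a c), (vscal a w).
    split. apply IHvs; auto. vring.
Qed.

Lemma span_sub (vs : list X) x y : in_span vs x -> in_span vs y -> in_span vs (vsub x y).
Proof. intros. unfold vsub. apply span_add; auto. rewrite vopp_scal. apply span_scal; auto. Qed.

Lemma span_in (vs : list X) v : In v vs -> in_span vs v.
Proof. induction vs; simpl; intros H. contradiction. apply span_cons. destruct H.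
  - subst. exists C1, vzero. split. apply span_0. rewrite vscal_1, vadd_0; auto.
  - exists C0, v. split; auto. rewrite vscal0, vadd0l; auto.
Qed.

Definition subsp (K : X -> Prop) := K vzero /\ (forall x y, K x -> K y -> K (vadd x y)) /\ (forall a x, K x -> K (vscal a x)).

Lemma subsp_sub K x y : subsp K -> K x -> K y -> K (vsub x y).
Proof. intros [H0 [H1 H2]] Hx Hy. unfold vsub. apply H1; auto. rewrite vopp_scal. apply H2; auto. Qed.

Lemma fd_inside (vs : list X) : forall K, subsp K -> (forall x, K x -> in_span vs x) ->
  exists ks, (forall k, In k ks -> K k) /\ (forall x, K x -> in_span ks x).
Proof.
  induction vs as [|v vs IH]; intros K HK Hs.
  - exists nil. split. intros k []. auto.
  - destruct (classic (forall x, K x -> in_span vs x)) as [Hall|Hn].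
    + apply IH; auto.
    + apply not_all_ex_not in Hn as [k Hk]. apply imply_to_and in Hk as [HKk Hnk].
      destruct (proj1 (span_cons v vs k) (Hs k HKk)) as [c [w [Hw Ek]]].
      assert (Hc : c <> C0). { intro E. subst. apply Hnk. rewrite vscal0, vadd0l. auto. }
      pose proof (Cnorm2_pos c Hc) as Hc2. unfold Cnorm2 in Hc2. assert (Hc3 : Re c * Re c + Im c * Im c <> 0) by lra.
      destruct (IH (fun x => K x /\ in_span vs x)) as [ks [Hks1 Hks2]].
      { destruct HK as [H0 [H1 H2]]. split. split; auto. apply span_0. split.
        intros x y [Hx1 Hx2] [Hy1 Hy2]. split; auto. apply span_add; auto.
        intros a x [Hx1 Hx2]. split; auto. apply span_scal; auto. }
      { intros x [_ H]; auto. }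
      exists (k :: ks). split.
      * intros k' [E|Hin]. subst; auto. apply Hks1; auto.
      * intros x Hx. destruct (proj1 (span_cons v vs x) (Hs x Hx)) as [d [u [Hu Ex]]].
        set (e := vsub x (vscal (Cmul d (Cinv c)) k)).
        assert (He1 : K e). { apply subsp_sub; auto. apply HK; auto. }
        assert (He2 : in_span vs e).
        { replace e with (vsub u (vscal (Cmul d (Cinv c)) w)). apply span_sub; auto. apply span_scal; auto.
          unfold e. rewrite Ex, Ek. vring. }
        apply span_cons. exists (Cmul d (Cinv c)), e. split. apply Hks2; auto. unfold e. vring.
Qed.

End Sp.

Lemma span_image {X Y : Banach} (P : X -> Prop) (F : X -> Y) :
  P vzero -> (forall x y, P x -> P y -> P (vadd x y)) -> (forall a x, P x -> P (vscal a x)) ->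
  (forall x y, P x -> P y -> F (vadd x y) = vadd (F x) (F y)) -> (forall a x, P x -> F (vscal a x) = vscal a (F x)) ->
  forall vs x, (forall v, In v vs -> P v) -> in_span vs x -> P x /\ in_span (map F vs) (F x).
Proof.
  intros H0 H1 H2 F1 F2. induction vs; intros x Hv Hx.
  - apply span_nil in Hx. subst. split; auto. simpl. apply span_nil.
    pose proof (F2 C0 vzero H0). rewrite !vscal0 in H. auto.
  - apply span_cons in Hx as [c [w [Hw E]]]. subst. destruct (IHvs w) as [IH1 IH2]; auto.
    intros; apply Hv; simpl; auto. assert (Pa : P a) by (apply Hv; simpl; auto).
    split. apply H1; auto. simpl. apply span_cons. exists c, (F w). split; auto.
    rewrite F1, F2; auto.
Qed.

Lemma dense_seq {Z : Banach} (P : Z -> Prop) : is_dense_set P -> forall x, exists u, (forall n, P (u n)) /\ converges u x.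
Proof.
  intros HD x.
  assert (H : forall n : nat, exists z, P z /\ vnorm (vsub x z) < / (INR n + 1)).
  { intro n. apply HD. apply Rinv_0_lt_compat. pose proof (pos_INR n); lra. }
  set (u := fun n => proj1_sig (constructive_indefinite_description _ (H n))).
  assert (Hu : forall n, P (u n) /\ vnorm (vsub x (u n)) < / (INR n + 1)).
  { intro n. unfold u. destruct (constructive_indefinite_description _ (H n)). simpl. auto. }
  exists u. split. intro n; apply Hu.
  intros e He. destruct (nat_arch (/ e)) as [N HN]. exists N. intros n Hn.
  destruct (Hu n) as [_ H2]. rewrite vnorm_sub_sym. eapply Rlt_le_trans. apply H2.
  apply le_INR in Hn. pose proof (pos_INR N).
  rewrite <- (Rinv_inv e). apply Rinv_le_contravar. apply Rinv_0_lt_compat; lra. lra.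
Qed.

Section Cl.
Context {Z : Banach}.
Variable P : Z -> Prop.
Hypothesis HP : subsp P.
Definition clo (x : Z) := forall e, e > 0 -> exists z, P z /\ vnorm (vsub x z) < e.

Lemma clo_in x : P x -> clo x.
Proof. intros H e He. exists x. rewrite vsub_self, vnorm0. auto. Qed.

Lemma clo_add x y : clo x -> clo y -> clo (vadd x y).
Proof. intros Hx Hy e He. destruct (Hx (e/2)) as [a [Ha1 Ha2]]. lra. destruct (Hy (e/2)) as [b [Hb1 Hb2]]. lra.
  exists (vadd a b). split. apply HP; auto. rewrite vsub_addsub. pose proof (vnorm_triangle (vsub x a) (vsub y b)). lra. Qed.

Lemma clo_scal a x : clo x -> clo (vscal a x).
Proof. intros Hx e He. pose proof (Cabs_nonneg a).
  destruct (Hx (e / (Cabs a + 1))) as [b [Hb1 Hb2]]. apply Rdiv_lt_0_compat; lra.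
  exists (vscal a b). split. apply HP; auto. rewrite <- vscal_sub, vnorm_scal.
  pose proof (vnorm_nonneg (vsub x b)).
  apply Rle_lt_trans with ((Cabs a + 1) * vnorm (vsub x b)). nra.
  replace e with ((Cabs a + 1) * (e / (Cabs a + 1))) by (field; lra). apply Rmult_lt_compat_l; lra. Qed.

Lemma clo_sub x y : clo x -> clo y -> clo (vsub x y).
Proof. intros. unfold vsub. apply clo_add; auto. rewrite vopp_scal. apply clo_scal; auto. Qed.

Lemma clo_lim (u : nat -> Z) x : (forall n, clo (u n)) -> converges u x -> clo x.
Proof. intros Hu Hc e He. destruct (Hc (e/2)) as [N HN]. lra. destruct (Hu N (e/2)) as [z [Hz1 Hz2]]. lra.
  exists z. split; auto. specialize (HN N (le_n _)). pose proof (vnorm_sub_tri x (u N) z).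
  rewrite (vnorm_sub_sym x (u N)) in H. lra. Qed.

End Cl.

Lemma tot_sub {X Y : Banach} (F : X -> Y) : (forall x y, F (vadd x y) = vadd (F x) (F y)) ->
  (forall a x, F (vscal a x) = vscal a (F x)) -> forall x y, F (vsub x y) = vsub (F x) (F y).
Proof. intros H1 H2 x y. unfold vsub. rewrite H1, !vopp_scal, H2. auto. Qed.

Lemma tot_zero {X Y : Banach} (F : X -> Y) : (forall a x, F (vscal a x) = vscal a (F x)) -> F vzero = vzero.
Proof. intros H. pose proof (H C0 vzero). rewrite !vscal0 in H0. auto. Qed.

Lemma res_ex {X Y : Banach} (A : LinOp X Y) (B : LinOp Y X) nu :
  closed_op A -> in_resolvent (prod_dom B A) (prod_app B A) nu ->
  exists R : X -> X,
    (forall x, prod_dom B A (R x) /\ sh (prod_app B A) nu (R x) = x) /\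
    (forall u, prod_dom B A u -> R (sh (prod_app B A) nu u) = u) /\
    (forall x y, R (vadd x y) = vadd (R x) (R y)) /\ (forall a x, R (vscal a x) = vscal a (R x)) /\
    (exists c, 0 <= c /\ forall x, vnorm (R x) <= c * vnorm x) /\
    (exists g, 0 <= g /\ forall x, vnorm (app A (R x)) <= g * vnorm x).
Proof.
  intros hAc hres. destruct (resolvent_fun _ _ (prod_lin B A) nu hres) as [R [H1 [H2 [H3 [H4 [c [Hc Hc']]]]]]].
  exists R. split; auto. split; auto. split; auto. split; auto. split. exists c; auto.
  apply closed_graph.
  - intros x y. rewrite H3, app_add; auto; apply H1.
  - intros a x. rewrite H4, app_scal; auto; apply H1.
  - intros u x y Hu Hy. apply (hAc (fun n => R (u n)) (R x) y); auto. intro; apply H1.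
    apply (conv_bounded R c); auto. apply tot_sub; auto.
Qed.

Section M.
Context {X Y : Banach}.
Variables (A : LinOp X Y) (B : LinOp Y X) (lam : Cplx).
Hypothesis hlam : lam <> C0.

Let DAB := prod_dom A B.
Let fAB := prod_app A B.
Let DBA := prod_dom B A.
Let fBA := prod_app B A.

Lemma lam2 : Re lam * Re lam + Im lam * Im lam <> 0.
Proof. pose proof (Cnorm2_pos lam hlam). unfold Cnorm2 in H. lra. Qed.

Lemma K1 y : ker_shift DAB fAB lam y -> ker_shift DBA fBA lam (app B y).
Proof.
  intros [[Hy1 Hy2] E]. apply vsub_eq0 in E. unfold fAB, prod_app in E.
  split. split; auto. rewrite E. apply dom_scal; auto.
  unfold fBA, prod_app. rewrite E, app_scal; auto. apply vsub_self.
Qed.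

Lemma K2 y : ker_shift DAB fAB lam y -> app A (app B y) = vscal lam y.
Proof. intros [_ E]. apply vsub_eq0 in E. auto. Qed.

Lemma R1 x : dom A x -> ran_shift DAB fAB lam (app A x) -> ran_shift DBA fBA lam x.
Proof.
  intros Hx [w [[Hw1 Hw2] Ew]]. unfold fAB, prod_app in Ew.
  pose proof lam2 as L2.
  set (u := vscal (Cinv lam) (vsub (app B w) x)).
  assert (Hu : dom A u) by (apply dom_scal, dom_sub; auto).
  assert (Au : app A u = w).
  { unfold u. rewrite app_scal, app_sub; auto. 2: apply dom_sub; auto. rewrite <- Ew. vring. }
  exists u. split. split; auto. rewrite Au; auto.
  unfold fBA, prod_app. rewrite Au. unfold u. vring.
Qed.

Lemma R2 x : ran_shift DBA fBA lam x -> dom A x -> ran_shift DAB fAB lam (app A x).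
Proof.
  intros [u [[Hu1 Hu2] Eu]] Hx. unfold fBA, prod_app in Eu.
  assert (E : app B (app A u) = vadd x (vscal lam u)). { rewrite <- Eu. vring. }
  exists (app A u). split. split; auto. rewrite E. apply dom_add; auto. apply dom_scal; auto.
  unfold fAB, prod_app. rewrite E, app_add, app_scal; auto. vring. apply dom_scal; auto.
Qed.

Lemma ker_sub : subsp (ker_shift DAB fAB lam).
Proof.
  pose proof (prod_lin A B) as HL. split; [|split].
  - split. apply lp_0 with (f := fAB); auto. apply (sh_0 DAB fAB HL).
  - intros x y [Hx Ex] [Hy Ey]. split. apply (lp_add DAB fAB HL); auto.
    change (sh fAB lam (vadd x y) = vzero). rewrite (sh_add DAB fAB HL); auto. fold (sh fAB lam x) in Ex.
    fold (sh fAB lam y) in Ey. rewrite Ex, Ey. apply vadd_0.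
  - intros a x [Hx Ex]. split. apply (lp_scal DAB fAB HL); auto.
    change (sh fAB lam (vscal a x) = vzero). rewrite (sh_scal DAB fAB HL); auto. fold (sh fAB lam x) in Ex.
    rewrite Ex. apply vscal_zero.
Qed.

Lemma ran_subsp : subsp (ran_shift DAB fAB lam).
Proof.
  pose proof (prod_lin A B) as HL. split; [|split].
  apply (ran_0 _ _ HL). intros; apply (ran_add _ _ HL); auto. intros; apply (ran_scal _ _ HL); auto.
Qed.

End M.

Definition resP {X Y : Banach} (A : LinOp X Y) (B : LinOp Y X) nu (R : X -> X) :=
    (forall x, prod_dom B A (R x) /\ sh (prod_app B A) nu (R x) = x) /\
    (forall u, prod_dom B A u -> R (sh (prod_app B A) nu u) = u) /\
    (forall x y, R (vadd x y) = vadd (R x) (R y)) /\ (forall a x, R (vscal a x) = vscal a (R x)) /\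
    (exists c, 0 <= c /\ forall x, vnorm (R x) <= c * vnorm x) /\
    (exists g, 0 <= g /\ forall x, vnorm (app A (R x)) <= g * vnorm x).

Lemma resP_ex {X Y : Banach} (A : LinOp X Y) (B : LinOp Y X) nu :
  closed_op A -> in_resolvent (prod_dom B A) (prod_app B A) nu -> exists R, resP A B nu R.
Proof. intros. destruct (res_ex A B nu H H0) as [R HR]. exists R. exact HR. Qed.

Section M2.
Context {X Y : Banach}.
Variables (A : LinOp X Y) (B : LinOp Y X) (lam nu : Cplx) (R : X -> X).
Hypothesis hlam : lam <> C0.
Hypothesis hR : resP A B nu R.

Let DAB := prod_dom A B.
Let fAB := prod_app A B.
Let DBA := prod_dom B A.
Let fBA := prod_app B A.

Lemma HLBA : lin_pair DBA fBA. Proof. apply prod_lin. Qed.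
Lemma HLAB : lin_pair DAB fAB. Proof. apply prod_lin. Qed.

Lemma R_dom x : DBA (R x). Proof. apply hR. Qed.
Lemma R_sh x : sh fBA nu (R x) = x. Proof. apply hR. Qed.
Lemma R_inv u : DBA u -> R (sh fBA nu u) = u. Proof. apply hR. Qed.
Lemma R_add x y : R (vadd x y) = vadd (R x) (R y). Proof. apply hR. Qed.
Lemma R_scal a x : R (vscal a x) = vscal a (R x). Proof. apply hR. Qed.
Lemma R_sub x y : R (vsub x y) = vsub (R x) (R y). Proof. apply tot_sub. apply R_add. apply R_scal. Qed.

Lemma R_fBA x : fBA (R x) = vadd x (vscal nu (R x)).
Proof. rewrite <- (R_sh x) at 2. unfold sh. vring. Qed.

Lemma Rc u : DBA u -> R (sh fBA lam u) = sh fBA lam (R u).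
Proof.
  intro Hu. set (v := R u). assert (Hv : DBA v) by apply R_dom.
  set (s := vadd u (vscal (Cadd nu (Copp lam)) v)).
  assert (E1 : sh fBA lam v = s). { unfold sh. unfold v. rewrite R_fBA. fold v. unfold s. vring. }
  assert (Hs : DBA s). { apply (lp_add _ _ HLBA); auto. apply (lp_scal _ _ HLBA); auto. }
  rewrite E1. rewrite <- (R_inv s Hs). f_equal.
  unfold s. rewrite (sh_add _ _ HLBA), (sh_scal _ _ HLBA); auto. 2: apply (lp_scal _ _ HLBA); auto.
  unfold v. rewrite R_sh. unfold sh. vring.
Qed.

Lemma char x : ran_shift DBA fBA lam x <-> ran_shift DAB fAB lam (app A (R x)).
Proof.
  split.
  - intros [u [Hu E]]. apply R2; auto. 
    exists (R u). split. apply R_dom. change (sh fBA lam (R u) = R x). rewrite <- Rc; auto. rewrite <- E. auto.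
    apply R_dom.
  - intro H. apply R1 in H; auto. 2: apply R_dom.
    assert (E : x = vadd (sh fBA lam (R x)) (vscal (Cadd lam (Copp nu)) (R x))).
    { unfold sh. rewrite R_fBA. vring. }
    rewrite E. apply (ran_add _ _ HLBA). apply (ran_sh _ _). apply R_dom.
    apply (ran_scal _ _ HLBA); auto.
Qed.

Lemma AR_lin : (forall x y, app A (R (vadd x y)) = vadd (app A (R x)) (app A (R y))) /\
               (forall a x, app A (R (vscal a x)) = vscal a (app A (R x))).
Proof. split; intros. rewrite R_add, app_add; auto; apply R_dom. rewrite R_scal, app_scal; auto; apply R_dom. Qed.

Lemma closed_transfer : is_closed_set (ran_shift DAB fAB lam) -> is_closed_set (ran_shift DBA fBA lam).
Proof.
  intros HC u l Hu Hl. apply char. apply (HC (fun n => app A (R (u n)))).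
  intro n. apply char; auto.
  destruct hR as [_ [_ [_ [_ [_ [g [Hg Hg']]]]]]].
  apply (conv_bounded (fun x => app A (R x)) g); auto. intros; apply (tot_sub (fun x => app A (R x))); apply AR_lin.
Qed.

Lemma surj_transfer : (forall y, ran_shift DAB fAB lam y) -> (forall x, ran_shift DBA fBA lam x).
Proof. intros H x. apply char. apply H. Qed.

End M2.

Section M3.
Context {X Y : Banach}.
Variables (A : LinOp X Y) (B : LinOp Y X) (lam nu mu : Cplx) (R : X -> X) (Q : Y -> Y).
Hypothesis hlam : lam <> C0.
Hypothesis hR : resP A B nu R.
Hypothesis hQ : resP B A mu Q.

Let DAB := prod_dom A B.
Let fAB := prod_app A B.
Let DBA := prod_dom B A.
Let fBA := prod_app B A.

Lemma Q_ranT y : ran_shift DAB fAB lam y -> ran_shift DAB fAB lam (Q y).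
Proof.
  intros [w [Hw E]]. exists (Q w). split. apply (R_dom B A mu Q hQ).
  change (sh fAB lam (Q w) = Q y). rewrite <- E. symmetry. apply (Rc B A lam mu Q hQ w Hw).
Qed.

Lemma dense_transfer : densely_defined A ->
  is_dense_set (ran_shift DAB fAB lam) -> is_dense_set (ran_shift DBA fBA lam).
Proof.
  intros hAd HD. pose proof (ran_subsp B A lam) as HP. fold DBA fBA in HP.
  set (P := ran_shift DBA fBA lam) in *.
  assert (Sa : forall y, clo P (app B (Q y))).
  { intro y. destruct (dense_seq _ HD y) as [z [Hz Hzc]].
    apply (clo_lim P (fun n => app B (Q (z n)))).
    - intro n. apply clo_in. apply (R2 B A lam). apply Q_ranT; auto.
      apply (R_dom B A mu Q hQ).
    - destruct hQ as [_ [_ [_ [_ [_ [h [Hh Hh']]]]]]].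
      apply (conv_bounded (fun y => app B (Q y)) h); auto.
      intros; apply (tot_sub (fun y => app B (Q y))); apply (AR_lin B A mu Q hQ). }
  assert (Sb : forall x, clo P (vadd x (vscal nu (R x)))).
  { intro x. destruct (dense_seq _ hAd x) as [xk [Hxk Hxc]].
    apply (clo_lim P (fun k => vadd (xk k) (vscal nu (R (xk k))))).
    - intro k. set (w := app A (R (xk k))).
      assert (Ew : app B w = vadd (xk k) (vscal nu (R (xk k)))) by apply (R_fBA A B nu R hR).
      assert (Hw : DAB w).
      { split. apply (R_dom A B nu R hR). rewrite Ew. apply dom_add; auto. apply dom_scal. apply (R_dom A B nu R hR). }
      rewrite <- Ew. rewrite <- (R_inv B A mu Q hQ w Hw). apply Sa.
    - apply conv_add; auto. apply conv_scal.
      destruct hR as [_ [_ [_ [_ [[c [Hc Hc']] _]]]]].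
      apply (conv_bounded R c); auto. apply (R_sub A B nu R hR). }
  assert (Sc : forall x, clo P x).
  { intro x. pose proof (lam2 lam hlam) as L2.
    assert (E1 : fBA (R x) = vadd x (vscal nu (R x))) by apply (R_fBA A B nu R hR).
    assert (E : x = vadd (sh fBA lam (R x)) (vscal (Cadd lam (Copp nu)) (R x))).
    { unfold sh. rewrite E1. vring. }
    assert (E2 : R x = vscal (Cinv lam) (vsub (vadd x (vscal nu (R x))) (sh fBA lam (R x)))).
    { unfold sh. rewrite E1. vring. }
    assert (HS : clo P (sh fBA lam (R x))). { apply clo_in. apply ran_sh. apply (R_dom A B nu R hR). }
    assert (HRx : clo P (R x)). { rewrite E2. apply clo_scal; auto. apply clo_sub; auto. }
    rewrite E. apply clo_add; auto. apply clo_scal; auto. }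
  intros x e He. apply Sc; auto.
Qed.

End M3.

Section GG.
Context {Z : Banach}.
Variables (D : Z -> Prop) (f : Z -> Z).
Hypothesis HL : lin_pair D f.

Lemma inj_iff lam : injective_shift D f lam <-> (forall x, ker_shift D f lam x -> x = vzero).
Proof.
  split.
  - intros H x [Hx E]. apply H; auto. apply (lp_0 D f HL).
    change (sh f lam x = sh f lam vzero). rewrite (sh_0 D f HL). exact E.
  - intros H x1 x2 H1 H2 E. apply vsub_eq0. apply H. split. apply (lp_sub D f HL); auto.
    change (sh f lam (vsub x1 x2) = vzero). rewrite (sh_sub D f HL); auto.
    unfold sh. rewrite E. apply vsub_self.
Qed.

Lemma ap_iff lam : in_sigma_ap D f lam <-> ~ (exists c, forall x, D x -> vnorm x <= c * vnorm (sh f lam x)).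
Proof.
  split.
  - intros [u [Hu1 [Hu2 Hu3]]] [c Hc]. apply conv_0_norm in Hu3.
    destruct (Hu3 (/ (Rabs c + 1))) as [N HN]. apply Rinv_0_lt_compat. pose proof (Rabs_pos c); lra.
    specialize (HN N (le_n _)). specialize (Hc (u N) (Hu1 N)). rewrite Hu2 in Hc.
    change (vsub (f (u N)) (vscal lam (u N))) with (sh f lam (u N)) in HN.
    pose proof (Rabs_pos c). pose proof (Rle_abs c). pose proof (vnorm_nonneg (sh f lam (u N))).
    rewrite !vnorm_sub0 in HN.
    assert ((Rabs c + 1) * vnorm (sh f lam (u N)) < (Rabs c + 1) * / (Rabs c + 1)).
    { apply Rmult_lt_compat_l; lra. }
    rewrite Rinv_r in H2 by lra. nra.
  - intro H.
    assert (Hn : forall n : nat, exists x, D x /\ vnorm x > (INR n + 1) * vnorm (sh f lam x)).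
    { intro n. apply NNPP. intro H1. apply H. exists (INR n + 1). intros x Hx. apply Rnot_lt_le. intro H2.
      apply H1. exists x. split; auto. }
    set (xs := fun n => proj1_sig (constructive_indefinite_description _ (Hn n))).
    assert (Hxs : forall n, D (xs n) /\ vnorm (xs n) > (INR n + 1) * vnorm (sh f lam (xs n))).
    { intro n. unfold xs. destruct (constructive_indefinite_description _ (Hn n)). simpl; auto. }
    assert (Hpos : forall n, vnorm (xs n) > 0).
    { intro n. destruct (Hxs n) as [_ H2]. pose proof (vnorm_nonneg (sh f lam (xs n))). pose proof (pos_INR n). nra. }
    exists (fun n => vscal (Cr (/ vnorm (xs n))) (xs n)). split; [|split].
    + intro n. apply (lp_scal D f HL). apply Hxs.
    + intro n. pose proof (Hpos n). rewrite vnorm_scal, Cabs_Cr, Rabs_pos_eq. field. lra.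
      left. apply Rinv_0_lt_compat. lra.
    + apply conv_0_norm. intros e He. destruct (nat_arch (/ e)) as [N HN]. exists N. intros n Hn'.
      change (vsub (f (vscal (Cr (/ vnorm (xs n))) (xs n))) (vscal lam (vscal (Cr (/ vnorm (xs n))) (xs n))))
        with (sh f lam (vscal (Cr (/ vnorm (xs n))) (xs n))).
      rewrite (sh_scal D f HL) by apply Hxs. rewrite vnorm_scal, Cabs_Cr, Rabs_pos_eq.
      2: left; apply Rinv_0_lt_compat; apply Hpos.
      destruct (Hxs n) as [_ H2]. specialize (Hpos n). apply le_INR in Hn'. pose proof (pos_INR N).
      set (a := vnorm (xs n)) in *. set (b := vnorm (sh f lam (xs n))) in *.
      assert (b < a / (INR n + 1)). { apply Rmult_lt_reg_l with (INR n + 1). lra. field_simplify; lra. }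
      assert (a / (INR n + 1) <= a * e).
      { unfold Rdiv. apply Rmult_le_compat_l. lra. rewrite <- (Rinv_inv e). apply Rinv_le_contravar.
        apply Rinv_0_lt_compat; lra. lra. }
      apply Rmult_lt_reg_l with a. auto. field_simplify; try lra.
Qed.

End GG.

Section M4.
Context {X Y : Banach}.
Variables (A : LinOp X Y) (B : LinOp Y X) (lam : Cplx).
Hypothesis hlam : lam <> C0.

Let DAB := prod_dom A B.
Let fAB := prod_app A B.
Let DBA := prod_dom B A.
Let fBA := prod_app B A.

Lemma kerfd_transfer : finite_dim_set (ker_shift DAB fAB lam) -> finite_dim_set (ker_shift DBA fBA lam).
Proof.
  intros [vs Hvs]. destruct (fd_inside vs _ (ker_sub A B lam) Hvs) as [ks [Hks1 Hks2]].
  exists (map (app B) ks). intros x Hx.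
  pose proof (K1 B A lam x Hx) as H1. pose proof (K2 B A lam x Hx) as H2.
  destruct (span_image (dom B) (app B) (dom_0 _ _ B) (dom_add _ _ B) (dom_scal _ _ B)
     (app_add _ _ B) (app_scal _ _ B) ks (app A x)) as [_ H3].
  { intros v Hv. apply Hks1 in Hv. destruct Hv as [[Hv _] _]. auto. }
  { apply Hks2. auto. }
  rewrite H2 in H3. rewrite <- (vscal_inv_cancel lam x hlam). apply span_scal. auto.
Qed.

Lemma inj_transfer : injective_shift DAB fAB lam -> injective_shift DBA fBA lam.
Proof.
  intros H. apply (inj_iff _ _ (prod_lin B A) lam). intros x Hx.
  pose proof (proj1 (inj_iff _ _ (prod_lin A B) lam) H) as H0. clear H. rename H0 into H.
  pose proof (K1 B A lam x Hx) as H1. pose proof (K2 B A lam x Hx) as H2.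
  apply H in H1. rewrite H1, app_zero in H2.
  rewrite <- (vscal_inv_cancel lam x hlam), <- H2. apply vscal_zero.
Qed.

Variables (nu mu : Cplx) (R : X -> X) (Q : Y -> Y).
Hypothesis hR : resP A B nu R.
Hypothesis hQ : resP B A mu Q.

Lemma codim_transfer : finite_codim_set (ran_shift DAB fAB lam) -> finite_codim_set (ran_shift DBA fBA lam).
Proof.
  intros [vs Hvs]. exists (map (fun v => app B (Q v)) vs). intro x.
  pose proof (lam2 lam hlam) as L2.
  destruct (Hvs (app A (R x))) as [m [u [Hm [Hu E]]]].
  set (q := Q u). assert (Hq : DAB q) by apply (R_dom B A mu Q hQ).
  assert (Eq : fAB q = vadd u (vscal mu q)) by apply (R_fBA B A mu Q hQ).
  set (p := app B q).
  assert (Hp : in_span (map (fun v => app B (Q v)) vs) p).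
  { destruct (span_image (fun _ => True) (fun v => app B (Q v))) with (vs := vs) (x := u) as [_ H]; auto.
    intros; apply (AR_lin B A mu Q hQ). intros; apply (AR_lin B A mu Q hQ). }
  set (k := Cmul (Cadd lam (Copp mu)) (Cinv lam)).
  set (v := R x). assert (Hv : DBA v) by apply (R_dom A B nu R hR).
  assert (Hdp : dom A p) by apply Hq.
  assert (H1 : ran_shift DBA fBA lam (vsub v (vscal k p))).
  { apply (R1 A B lam hlam). apply dom_sub. apply Hv. apply dom_scal; auto.
    rewrite app_sub, app_scal; auto. 2: apply Hv. 2: apply dom_scal; auto.
    unfold v. rewrite E. change (app A p) with (fAB q). rewrite Eq.
    replace (vsub (vadd m u) (vscal k (vadd u (vscal mu q))))
      with (vadd m (sh fAB lam (vscal (Cmul mu (Cinv lam)) q))).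
    apply (ran_add _ _ (prod_lin A B)); auto. apply ran_sh. apply (lp_scal _ _ (prod_lin A B)); auto.
    unfold sh. rewrite (lp_fscal _ _ (prod_lin A B)); auto. fold fAB. rewrite Eq. unfold k. vring. }
  assert (Ex : x = vadd (sh fBA lam v) (vscal (Cadd lam (Copp nu)) v)).
  { unfold sh, v. rewrite (R_fBA A B nu R hR). vring. }
  exists (vadd (sh fBA lam v) (vscal (Cadd lam (Copp nu)) (vsub v (vscal k p)))),
         (vscal (Cmul (Cadd lam (Copp nu)) k) p).
  split. apply (ran_add _ _ (prod_lin B A)). apply ran_sh; auto. apply (ran_scal _ _ (prod_lin B A)); auto.
  split. apply span_scal; auto.
  rewrite Ex at 1. vring.
Qed.

Lemma bb_transfer : (exists c, forall x, DBA x -> vnorm x <= c * vnorm (sh fBA lam x)) ->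
                    (exists c, forall y, DAB y -> vnorm y <= c * vnorm (sh fAB lam y)).
Proof.
  intros [c0 Hc0]. pose proof (lam2 lam hlam) as L2.
  set (c := Rmax c0 0).
  assert (Hc : 0 <= c) by apply Rmax_r.
  assert (Hcx : forall x, DBA x -> vnorm x <= c * vnorm (sh fBA lam x)).
  { intros x Hx. eapply Rle_trans. apply Hc0; auto. apply Rmult_le_compat_r. apply vnorm_nonneg. apply Rmax_l. }
  pose proof hR as hR0. destruct hR0 as [_ [_ [_ [_ [_ [g [Hg Hg']]]]]]].
  pose proof hQ as hQ0. destruct hQ0 as [_ [_ [_ [_ [[qc [Hqc Hqc']] [h [Hh Hh']]]]]]].
  set (L := Cabs (Cadd lam (Copp nu))). set (I := Cabs (Cinv lam)). set (M := Cabs mu).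
  assert (HL : 0 <= L) by apply Cabs_nonneg. assert (HI : 0 <= I) by apply Cabs_nonneg.
  assert (HM : 0 <= M) by apply Cabs_nonneg.
  set (a := g * h * (1 + L * c)).
  assert (Ha : 0 <= a). { unfold a. apply Rmult_le_pos. apply Rmult_le_pos; auto. nra. }
  exists (a + M * I * (a + qc)). intros y Hy.
  set (y' := Q y). assert (Hy' : DAB y') by apply (R_dom B A mu Q hQ).
  assert (Ey' : fAB y' = vadd y (vscal mu y')) by apply (R_fBA B A mu Q hQ).
  set (x := app B y').
  assert (Hx : DBA x).
  { split. apply Hy'. change (app A x) with (fAB y'). rewrite Ey'. apply dom_add. apply Hy. apply dom_scal. apply Hy'. }
  assert (ETy' : sh fAB lam y' = Q (sh fAB lam y)).
  { symmetry. apply (Rc B A lam mu Q hQ y Hy). }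
  assert (ESx : sh fBA lam x = app B (sh fAB lam y')).
  { unfold sh. unfold fAB, fBA, prod_app. rewrite app_sub, app_scal. unfold x. auto.
    apply Hy'. apply Hx. apply dom_scal. apply Hy'. }
  set (t := vnorm (sh fAB lam y)). assert (Ht : 0 <= t) by apply vnorm_nonneg.
  assert (B1 : vnorm (sh fBA lam x) <= h * t). { rewrite ESx, ETy'. apply Hh'. }
  assert (B2 : vnorm x <= c * h * t).
  { eapply Rle_trans. apply Hcx; auto. rewrite Rmult_assoc. apply Rmult_le_compat_l; auto. }
  assert (B3 : vnorm (app A x) <= a * t).
  { assert (E : app A x = app A (R (sh fBA nu x))). { f_equal. symmetry. apply (R_inv A B nu R hR x Hx). }
    rewrite E. eapply Rle_trans. apply Hg'.
    assert (E2 : sh fBA nu x = vadd (sh fBA lam x) (vscal (Cadd lam (Copp nu)) x)) by (unfold sh; vring).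
    rewrite E2. pose proof (vnorm_triangle (sh fBA lam x) (vscal (Cadd lam (Copp nu)) x)).
    rewrite vnorm_scal in H. fold L in H.
    assert (vnorm (sh fBA lam x) + L * vnorm x <= h * t + L * (c * h * t)).
    { apply Rplus_le_compat; auto. apply Rmult_le_compat_l; auto. }
    unfold a. assert (0 <= vnorm (vadd (sh fBA lam x) (vscal (Cadd lam (Copp nu)) x))) by apply vnorm_nonneg.
    apply Rle_trans with (g * (h * t + L * (c * h * t))). apply Rmult_le_compat_l; auto. lra.
    right. ring. }
  assert (B4 : vnorm (sh fAB lam y') <= qc * t). { rewrite ETy'. apply Hqc'. }
  assert (B5 : vnorm y' <= I * (a * t + qc * t)).
  { assert (E : y' = vscal (Cinv lam) (vsub (app A x) (sh fAB lam y'))).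
    { unfold sh, x, fAB, prod_app. vring. }
    rewrite E at 1. rewrite vnorm_scal. fold I. apply Rmult_le_compat_l; auto.
    eapply Rle_trans. apply vnorm_sub_le. lra. }
  assert (B6 : vnorm y <= vnorm (app A x) + M * vnorm y').
  { assert (E : y = vsub (app A x) (vscal mu y')).
    { change (app A x) with (fAB y'). rewrite Ey'. vring. }
    rewrite E at 1. eapply Rle_trans. apply vnorm_sub_le. rewrite vnorm_scal. fold M. lra. }
  assert (M * vnorm y' <= M * (I * (a * t + qc * t))) by (apply Rmult_le_compat_l; auto).
  fold t. nra.
Qed.

End M4.

Theorem theorem1p5 (X Y : Banach) (A : LinOp X Y) (B : LinOp Y X)
  (hAc : closed_op A) (hAd : densely_defined A)
  (hBc : closed_op B) (hBd : densely_defined B)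
  (hAB : exists mu, in_resolvent (prod_dom A B) (prod_app A B) mu)
  (hBA : exists mu, in_resolvent (prod_dom B A) (prod_app B A) mu) :
  forall lam : Cplx, lam <> C0 ->
    let DAB := prod_dom A B in let fAB := prod_app A B in
    let DBA := prod_dom B A in let fBA := prod_app B A in
    (is_closed_set (ran_shift DAB fAB lam) <-> is_closed_set (ran_shift DBA fBA lam)) /\
    (is_dense_set (ran_shift DAB fAB lam) <-> is_dense_set (ran_shift DBA fBA lam)) /\
    (upper_semi_fredholm DAB fAB lam <-> upper_semi_fredholm DBA fBA lam) /\
    (lower_semi_fredholm DAB fAB lam <-> lower_semi_fredholm DBA fBA lam) /\
    (in_sigma_ap DAB fAB lam <-> in_sigma_ap DBA fBA lam) /\
    (in_sigma_c DAB fAB lam <-> in_sigma_c DBA fBA lam) /\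
    (in_sigma_r DAB fAB lam <-> in_sigma_r DBA fBA lam) /\
    (in_sigma_ess DAB fAB lam <-> in_sigma_ess DBA fBA lam).
Proof.
  intros lam hlam. cbv zeta.
  destruct hAB as [mu Hmu]. destruct hBA as [nu Hnu].
  destruct (resP_ex A B nu hAc Hnu) as [R hR].
  destruct (resP_ex B A mu hBc Hmu) as [Q hQ].
  assert (Hcl : is_closed_set (ran_shift (prod_dom A B) (prod_app A B) lam) <->
                is_closed_set (ran_shift (prod_dom B A) (prod_app B A) lam)).
  { split. apply (closed_transfer A B lam nu R hlam hR). apply (closed_transfer B A lam mu Q hlam hQ). }
  assert (Hde : is_dense_set (ran_shift (prod_dom A B) (prod_app A B) lam) <->
                is_dense_set (ran_shift (prod_dom B A) (prod_app B A) lam)).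
  { split. apply (dense_transfer A B lam nu mu R Q hlam hR hQ hAd).
    apply (dense_transfer B A lam mu nu Q R hlam hQ hR hBd). }
  assert (Hup : upper_semi_fredholm (prod_dom A B) (prod_app A B) lam <->
                upper_semi_fredholm (prod_dom B A) (prod_app B A) lam).
  { unfold upper_semi_fredholm. split; intros [H1 H2]; split; try tauto.
    apply (kerfd_transfer A B lam hlam); auto. apply (kerfd_transfer B A lam hlam); auto. }
  assert (Hlo : lower_semi_fredholm (prod_dom A B) (prod_app A B) lam <->
                lower_semi_fredholm (prod_dom B A) (prod_app B A) lam).
  { unfold lower_semi_fredholm. split; intros [H1 H2]; split; try tauto.
    apply (codim_transfer A B lam hlam nu mu R Q hR hQ); auto.
    apply (codim_transfer B A lam hlam mu nu Q R hQ hR); auto. }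
  assert (Hbb : (exists c, forall x, prod_dom A B x -> vnorm x <= c * vnorm (sh (prod_app A B) lam x)) <->
                (exists c, forall x, prod_dom B A x -> vnorm x <= c * vnorm (sh (prod_app B A) lam x))).
  { split. apply (bb_transfer B A lam hlam mu nu Q R hQ hR). apply (bb_transfer A B lam hlam nu mu R Q hR hQ). }
  assert (Hap : in_sigma_ap (prod_dom A B) (prod_app A B) lam <-> in_sigma_ap (prod_dom B A) (prod_app B A) lam).
  { rewrite (ap_iff _ _ (prod_lin A B)), (ap_iff _ _ (prod_lin B A)). tauto. }
  assert (Hinj : injective_shift (prod_dom A B) (prod_app A B) lam <-> injective_shift (prod_dom B A) (prod_app B A) lam).
  { split. apply (inj_transfer A B lam hlam). apply (inj_transfer B A lam hlam). }
  assert (Hsur : (forall y, ran_shift (prod_dom A B) (prod_app A B) lam y) <-> (forall x, ran_shift (prod_dom B A) (prod_app B A) lam x)).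
  { split. apply (surj_transfer A B lam nu R hlam hR). apply (surj_transfer B A lam mu Q hlam hQ). }
  assert (Hres : in_resolvent (prod_dom A B) (prod_app A B) lam <-> in_resolvent (prod_dom B A) (prod_app B A) lam).
  { unfold in_resolvent. fold (sh (prod_app A B) lam). fold (sh (prod_app B A) lam). tauto. }
  split; auto. split; auto. split; auto. split; auto. split; auto.
  split. unfold in_sigma_c, in_spectrum. tauto.
  split. unfold in_sigma_r. tauto.
  unfold in_sigma_ess, fredholm. tauto.
Qed.
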